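(* Let $n$ be a positive integer, let $A(n)=(a_{ij})_{i,j\in\mathbb{N}}$ be the greedy matrix described in the context, and let $\sigma=2n^3-n(n-3)$. Then there exist integers $pp\geq 0$ and $p\geq 1$ such that $a_{i+p,j+p}=a_{ij}$ for all $i>pp$ and all $j\ge 1$, and $pp+p\leq 2^{\sigma^2}$.
   Context: $\mathbb{N}=\{1,2,3,\dots\}$. Fix a positive integer $n$. The infinite $\{0,1\}$-matrix $A(n)=(a_{ij})_{i,j\in\mathbb{N}}$ is defined recursively. Its entries are determined row by row (row $1$ first), and within each row from left to right, so that $a_{kl}$ is determined after all $a_{ij}$ with $i<k$ and all $a_{kj}$ with $j<l$. One sets $a_{kl}=1$ if and only if all of the following hold: (1) $\sum_{j<l}a_{kj}<n+1$; (2) $\sum_{i<k}a_{il}<n+1$; (3) there is no pair $(i,j)$ with $1\le i<k$, $1\le j<l$ and $a_{ij}=a_{il}=a_{kj}=1$. Otherwise $a_{kl}=0$. *)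

(* Defs.v *)
From mathcomp Require Import all_boot.
Set Implicit Arguments. Unset Strict Implicit. Unset Printing Implicit Defensive.

(* Entries are indexed by positive naturals (1-based); entries with a zero
   index are irrelevant and set to false. *)

(* One greedy step: given a function f that is already correct on all
   positions (i,j) with i+j < k+l, compute a_{kl}. *)
Definition greedy_step (n : nat) (f : nat -> nat -> bool) (k l : nat) : bool :=
  [&& 0 < k, 0 < l,
      count (fun j => f k j) (iota 1 l.-1) < n.+1,
      count (fun i => f i l) (iota 1 k.-1) < n.+1 &
      ~~ has (fun i => has (fun j => [&& f i j, f i l & f k j]) (iota 1 l.-1))
             (iota 1 k.-1)].

(* Since a_{kl} only depends on entries a_{ij} with i <= k, j <= l,
   (i,j) <> (k,l), this implements the row-by-row, left-to-right recursion. *)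
Fixpoint greedy_upto (n N : nat) : nat -> nat -> bool :=
  match N with
  | 0 => fun _ _ => false
  | N'.+1 => let f := greedy_upto n N' in
             fun k l => if k + l <= N' then f k l else greedy_step n f k l
  end.

Definition greedyA (n k l : nat) : bool := greedy_upto n (k + l) k l.

(* Main.v *)
Require Import Defs.
From mathcomp Require Import all_boot.
From mathcomp Require Import zify.
Set Implicit Arguments. Unset Strict Implicit. Unset Printing Implicit Defensive.


Lemma greedy_step_ext n f g k l :
  (forall i j, i <= k -> j <= l -> i + j < k + l -> f i j = g i j) ->
  greedy_step n f k l = greedy_step n g k l.
Proof.
move=> H; rewrite /greedy_step.
have Hr : count (fun j => f k j) (iota 1 l.-1) = count (fun j => g k j) (iota 1 l.-1).
  apply: eq_in_count => j; rewrite mem_iota => /andP[H1 Hj]; apply: H; lia.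
have Hc : count (fun i => f i l) (iota 1 k.-1) = count (fun i => g i l) (iota 1 k.-1).
  apply: eq_in_count => i; rewrite mem_iota => /andP[H1 Hi]; apply: H; lia.
have Hh : has (fun i => has (fun j => [&& f i j, f i l & f k j]) (iota 1 l.-1)) (iota 1 k.-1)
        = has (fun i => has (fun j => [&& g i j, g i l & g k j]) (iota 1 l.-1)) (iota 1 k.-1).
  apply: eq_in_has => i; rewrite mem_iota => /andP[H1 Hi].
  apply: eq_in_has => j; rewrite mem_iota => /andP[H2 Hj].
  rewrite !H //; lia.
by rewrite Hr Hc Hh.
Qed.

Lemma greedy_upto_A n N k l : k + l <= N -> greedy_upto n N k l = greedyA n k l.
Proof.
elim: N k l => [|N IH] k l Hkl.
  have E1 : k = 0 by lia.
  have E2 : l = 0 by lia.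
  by rewrite E1 E2.
rewrite /=; case: ifP => Hle; first exact: IH.
have E : k + l = N.+1 by lia.
by rewrite /greedyA E /= Hle.
Qed.

Lemma greedyA_step n k l : greedyA n k l = greedy_step n (greedyA n) k l.
Proof.
case E: (k + l) => [|N].
  have E1 : k = 0 by lia.
  have E2 : l = 0 by lia.
  by rewrite E1 E2.
rewrite {1}/greedyA E /=.
have -> : (k + l <= N) = false by lia.
apply: greedy_step_ext => i j Hi Hj Hij; apply: greedy_upto_A; lia.
Qed.

Definition rc n k l := count (greedyA n k) (iota 1 l).
Definition cc n l k := count (fun i => greedyA n i l) (iota 1 k).
Definition rect n k l := has (fun i => has (fun j =>
   [&& greedyA n i j, greedyA n i l & greedyA n k j]) (iota 1 l.-1)) (iota 1 k.-1).

Lemma stepE n k l : greedyA n k l =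
  [&& 0 < k, 0 < l, rc n k l.-1 < n.+1, cc n l k.-1 < n.+1 & ~~ rect n k l].
Proof. by rewrite greedyA_step. Qed.

Lemma A0l n l : greedyA n 0 l = false.
Proof. by rewrite stepE. Qed.
Lemma Ak0 n k : greedyA n k 0 = false.
Proof. by rewrite stepE andbF. Qed.

Lemma count_iotaS (p : nat -> bool) m : count p (iota 1 m.+1) = count p (iota 1 m) + p m.+1.
Proof. have := iotaD 1 m 1; rewrite addn1 => ->; by rewrite count_cat /= add1n addn0. Qed.

Lemma count_iotaD (p : nat -> bool) m d : count p (iota 1 (m + d)) = count p (iota 1 m) + count p (iota m.+1 d).
Proof. by rewrite iotaD count_cat add1n. Qed.

Lemma rc_le n k l : rc n k l <= n.+1.
Proof.
elim: l => [|l IH]; first by rewrite /rc.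
rewrite /rc count_iotaS -/(rc n k l).
case: (boolP (greedyA n k l.+1)) => H /=; last by rewrite addn0.
move: H; rewrite stepE => /and5P [_ _ H _ _]; move: H => /=; lia.
Qed.

Lemma cc_le n l k : cc n l k <= n.+1.
Proof.
elim: k => [|k IH]; first by rewrite /cc.
rewrite /cc (count_iotaS (fun i => greedyA n i l)) -/(cc n l k).
case: (boolP (greedyA n k.+1 l)) => H /=; last by rewrite addn0.
move: H; rewrite stepE => /and5P [_ _ _ H _]; move: H => /=; lia.
Qed.

Lemma rc_mono n k l l' : l <= l' -> rc n k l <= rc n k l'.
Proof. move=> H; rewrite /rc -(subnKC H) count_iotaD; lia. Qed.
Lemma cc_mono n l k k' : k <= k' -> cc n l k <= cc n l k'.
Proof. move=> H; rewrite /cc -(subnKC H) count_iotaD; lia. Qed.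

Lemma rc_step n k l : greedyA n k l -> rc n k l.-1 < n.+1.
Proof. by rewrite stepE => /and5P[]. Qed.
Lemma cc_step n k l : greedyA n k l -> cc n l k.-1 < n.+1.
Proof. by rewrite stepE => /and5P[]. Qed.
Lemma pos_step n k l : greedyA n k l -> 0 < k /\ 0 < l.
Proof. by rewrite stepE => /and5P[]. Qed.

Lemma rcS n k l : rc n k l.+1 = rc n k l + greedyA n k l.+1.
Proof. by rewrite /rc count_iotaS. Qed.
Lemma ccS n l k : cc n l k.+1 = cc n l k + greedyA n k.+1 l.
Proof. by rewrite /cc (count_iotaS (fun i => greedyA n i l)). Qed.


Lemma count_sumE (T : Type) (p : pred T) s : count p s = \sum_(x <- s) (p x : nat).
Proof. elim: s => [|x s IH]; by rewrite ?big_nil ?big_cons //= IH. Qed.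

Lemma leq_sum_in (T : eqType) (s : seq T) (F G : T -> nat) :
  (forall x, x \in s -> F x <= G x) -> \sum_(x <- s) F x <= \sum_(x <- s) G x.
Proof.
elim: s => [|x s IH] H; first by rewrite !big_nil.
rewrite !big_cons leq_add //; first by apply: H; rewrite inE eqxx.
by apply: IH => y Hy; apply: H; rewrite inE Hy orbT.
Qed.

Lemma eq_sum_in (T : eqType) (s : seq T) (F G : T -> nat) :
  (forall x, x \in s -> F x = G x) -> \sum_(x <- s) F x = \sum_(x <- s) G x.
Proof. move=> H; apply: eq_big_seq => x Hx; exact: H. Qed.

Lemma sum_const_seq (T : Type) (s : seq T) c : \sum_(x <- s) c = size s * c.
Proof. elim: s => [|x s IH]; by rewrite ?big_nil ?big_cons //= IH mulSn. Qed.

Lemma sum_count_le (T : Type) (s : seq T) (f : T -> nat) c :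
  c * count (fun x => c <= f x) s <= \sum_(x <- s) f x.
Proof.
elim: s => [|x s IH]; first by rewrite big_nil muln0.
rewrite big_cons /= mulnDr; case: (leqP c (f x)) => H /=; rewrite ?muln1 ?muln0; lia.
Qed.

Lemma count_orb (T : Type) (p q : pred T) s :
  count (fun x => p x || q x) s <= count p s + count q s.
Proof. elim: s => [|x s IH] //=; case: (p x); case: (q x) => /=; lia. Qed.

Lemma count0 (T : Type) (p : pred T) s : (forall x, p x = false) -> count p s = 0.
Proof. move=> H; elim: s => //= x s ->; by rewrite H. Qed.

Lemma leq_count_in (T : eqType) (p q : pred T) s :
  (forall x, x \in s -> p x -> q x) -> count p s <= count q s.
Proof.
elim: s => [|x s IH] H //=; apply: leq_add; last first.
  by apply: IH => y Hy; apply: H; rewrite inE Hy orbT.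
case Hp: (p x) => //=; by rewrite (H x) // inE eqxx.
Qed.

Lemma cnt_split (T : Type) (p q : pred T) s :
  count (fun x => p x && q x) s + count (fun x => p x && ~~ q x) s = count p s.
Proof. elim: s => [|x s IH] //=; case: (p x); case: (q x) => /=; lia. Qed.

Lemma count_has_le (I X : Type) (sI : seq I) (sX : seq X) (Q : I -> X -> bool) :
  count (fun x => has (fun i => Q i x) sI) sX <= \sum_(i <- sI) count (Q i) sX.
Proof.
elim: sI => [|i sI IH] /=.
  rewrite big_nil; by elim: sX.
rewrite big_cons; apply: leq_trans (count_orb _ _ _) _; exact: leq_add.
Qed.

Lemma count_has2_le (I J X : Type) (sI : seq I) (sJ : seq J) (sX : seq X)
   (P : I -> J -> X -> bool) :
  count (fun x => has (fun i => has (fun j => P i j x) sJ) sI) sX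
   <= \sum_(i <- sI) \sum_(j <- sJ) count (P i j) sX.
Proof.
apply: leq_trans (count_has_le _ _ _) _; apply: leq_sum => i _.
exact: count_has_le.
Qed.

Lemma row_others n i j' B : 0 < j' <= B -> greedyA n i j' ->
  count (fun j => greedyA n i j && (j' != j)) (iota 1 B) <= n.
Proof.
move=> Hj Ha.
have Hc := rc_le n i B.
have Hs := cnt_split (greedyA n i) (fun j => j' != j) (iota 1 B).
have H1 : 0 < count (fun j => greedyA n i j && ~~ (j' != j)) (iota 1 B).
  rewrite -has_count; apply/hasP; exists j'; first by rewrite mem_iota; lia.
  by rewrite Ha eqxx.
rewrite /rc in Hc; lia.
Qed.

Lemma col_others n j i' K : 0 < i' <= K -> greedyA n i' j ->
  count (fun i => greedyA n i j && (i' != i)) (iota 1 K) <= n.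
Proof.
move=> Hj Ha.
have Hc := cc_le n j K.
have Hs := cnt_split (fun i => greedyA n i j) (fun i => i' != i) (iota 1 K).
have H1 : 0 < count (fun i => greedyA n i j && ~~ (i' != i)) (iota 1 K).
  rewrite -has_count; apply/hasP; exists i'; first by rewrite mem_iota; lia.
  by rewrite Ha eqxx.
rewrite /cc in Hc; lia.
Qed.

Definition Ub n := n ^ 3 + n + 1.
Definition Lb n := 2 * n ^ 3 + 2 * n.

Lemma n3E n : n ^ 3 = n * n * n.
Proof. by rewrite !expnS expn0 muln1 mulnA. Qed.

Lemma double_count n K B :
  \sum_(i <- iota 1 K) rc n i B = \sum_(j <- iota 1 B) cc n j K.
Proof.
rewrite /rc /cc; under eq_bigr do rewrite count_sumE.
rewrite exchange_big /=; apply: eq_bigr => j _; by rewrite count_sumE.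
Qed.

Lemma rowfull n k : 0 < k -> rc n k (k.-1 + Ub n) = n.+1.
Proof.
elim/ltn_ind: k => k IH Hk.
set B := k.-1 + Ub n.
have Fi : forall i, 0 < i < k -> rc n i B = n.+1.
  move=> i /andP[Hi Hik]; apply/eqP; rewrite eqn_leq rc_le /= -(IH i Hik Hi).
  apply: rc_mono; rewrite /B; lia.
have S1 : \sum_(i <- iota 1 k.-1) rc n i B = k.-1 * n.+1.
  rewrite (eq_sum_in (G := fun _ => n.+1)); first by rewrite sum_const_seq size_iota.
  move=> i; rewrite mem_iota => Hi; apply: Fi; lia.
have F : n.+1 * count (fun j => n.+1 <= cc n j k.-1) (iota 1 B) <= k.-1 * n.+1.
  by rewrite -S1 double_count; apply: sum_count_le.
set NF := count (fun j => cc n j k.-1 < n.+1) (iota 1 B).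
have HNF : Ub n <= NF.
  have := count_predC (fun j => n.+1 <= cc n j k.-1) (iota 1 B); rewrite size_iota.
  have -> : count (predC (fun j => n.+1 <= cc n j k.-1)) (iota 1 B) = NF.
    by apply: eq_count => j /=; rewrite -ltnNge.
  rewrite mulnC leq_pmul2r // in F; move: F; rewrite /B; lia.
case: (ltnP (rc n k B) n.+1) => Hm; last by apply/eqP; rewrite eqn_leq rc_le.
exfalso.
pose rect' j := has (fun i => has (fun j' =>
   [&& greedyA n i j', greedyA n i j, greedyA n k j' & j' != j]) (iota 1 B)) (iota 1 k.-1).
have Hcover : NF <= count (greedyA n k) (iota 1 B) + count rect' (iota 1 B).
  apply: leq_trans (count_orb _ _ _); apply: leq_count_in => j.
  rewrite mem_iota => Hj Hcc; case Ha: (greedyA n k j) => //=.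
  have := stepE n k j; rewrite Ha => /esym/negbT.
  have Hr : rc n k j.-1 < n.+1 by apply: leq_ltn_trans Hm; apply: rc_mono; lia.
  rewrite Hk Hr Hcc /= (_ : 0 < j); last by lia.
  rewrite /= negbK => /hasP [i Hi /hasP [j' Hj' /and3P [H1 H2 H3]]].
  apply/hasP; exists i => //; apply/hasP; exists j'.
    move: Hj'; rewrite !mem_iota; lia.
  rewrite H1 H2 H3 /=; move: Hj'; rewrite mem_iota; lia.
have Hrect : count rect' (iota 1 B) <= n * n * n.
  apply: leq_trans (count_has2_le _ _ _ _) _.
  apply: (@leq_trans (\sum_(i <- iota 1 k.-1) \sum_(j' <- iota 1 B)
            ((greedyA n i j' && greedyA n k j') * n))).
    apply: leq_sum => i _; apply: leq_sum_in => j' Hj'.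
    case Ha: (greedyA n i j'); case Hb: (greedyA n k j') => /=; rewrite ?mul0n;
      try by rewrite count0 // => x; rewrite ?andbF.
    rewrite mul1n; apply: leq_trans (row_others (i := i) _ Ha); first by apply: sub_count => j /=.
    by move: Hj'; rewrite mem_iota; lia.
  rewrite (exchange_big _ _ _ _ _ (fun i j' => (greedyA n i j' && greedyA n k j') * n)) /=.
  apply: (@leq_trans (\sum_(j' <- iota 1 B) (greedyA n k j' * (n * n)))).
    apply: leq_sum => j' _; case Hb: (greedyA n k j'); last first.
      by rewrite mul0n; under eq_bigr do rewrite andbF mul0n; rewrite big1.
    under eq_bigr do rewrite andbT.
    rewrite -big_distrl /= -count_sumE -/(cc n j' k.-1) mul1n leq_mul2r.
    by have := cc_step Hb; rewrite ltnS => ->; rewrite orbT.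
  rewrite -big_distrl /= -count_sumE -/(rc n k B) mulnA leq_mul2r leq_mul2r.
  by rewrite -ltnS Hm !orbT.
move: HNF Hcover Hrect; rewrite /Ub -/(rc n k B) n3E; lia.
Qed.


Lemma upper n k l : greedyA n k l -> l <= k.-1 + Ub n.
Proof.
move=> Ha; have [Hk Hl] := pos_step Ha.
rewrite leqNgt; apply/negP => Hlt.
have E : l = l.-1.+1 by lia.
have H1 := rc_le n k l.
have H2 := rowfull n Hk.
have H3 : rc n k (k.-1 + Ub n) <= rc n k l.-1 by apply: rc_mono; lia.
move: H1; rewrite E rcS -E Ha; lia.
Qed.

Lemma count_sub_iota (p : pred nat) c d : 0 < c ->
  count p (iota c d) <= count p (iota 1 (c.-1 + d)).
Proof.
move=> Hc; rewrite count_iotaD (_ : c.-1.+1 = c); lia.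
Qed.

Lemma colfull n c : 0 < c -> cc n c (c + Lb n) = n.+1.
Proof.
move=> Hc.
case: (ltnP (cc n c (c + Lb n)) n.+1) => Hm; last by apply/eqP; rewrite eqn_leq cc_le.
exfalso.
set K := c + Lb n.
set sR := iota c (Lb n).+1.
have EK : c.-1 + (Lb n).+1 = K by rewrite /K; lia.
pose rect'' k := has (fun i => has (fun j =>
   [&& greedyA n i c, greedyA n i j, greedyA n k j & i != k]) (iota 1 c.-1)) (iota 1 K).
have Hcover : (Lb n).+1 <= count (fun k => greedyA n k c) sR
     + (count (fun k => n.+1 <= rc n k c.-1) sR + count rect'' sR).
  have O1 := count_orb (fun k => greedyA n k c) (fun k => (n.+1 <= rc n k c.-1) || rect'' k) sR.
  have O2 := count_orb (fun k => (n.+1 <= rc n k c.-1)) rect'' sR.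
  suff O3 : count predT sR <= count (fun k => greedyA n k c || ((n.+1 <= rc n k c.-1) || rect'' k)) sR.
    move: O3; rewrite count_predT size_iota; lia.
  apply: leq_count_in => k.
  rewrite mem_iota => Hk _; case Ha: (greedyA n k c) => //=.
  have := stepE n k c; rewrite Ha => /esym/negbT.
  have Hcc : cc n c k.-1 < n.+1 by apply: leq_ltn_trans Hm; apply: cc_mono; rewrite /K; lia.
  rewrite Hcc Hc (_ : 0 < k); last by lia.
  case: (leqP n.+1 (rc n k c.-1)) => Hr //=.
  rewrite negbK => /hasP [i Hi /hasP [j Hj /and3P [H1 H2 H3]]].
  apply/hasP; exists i; first by move: Hi; rewrite !mem_iota /K; lia.
  apply/hasP; exists j => //; rewrite H1 H2 H3 /=.
  move: Hi; rewrite mem_iota; lia.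
have C1 : count (fun k => greedyA n k c) sR <= n.
  by apply: leq_trans (count_sub_iota _ _ Hc) _; rewrite EK -/(cc n c K) -ltnS.
have C2 : count (fun k => n.+1 <= rc n k c.-1) sR <= (Ub n).-1.
  set X := count _ sR.
  have T1 : \sum_(i <- iota 1 K) rc n i c.-1 <= c.-1 * n.+1.
    rewrite double_count; apply: (@leq_trans (\sum_(j <- iota 1 c.-1) n.+1)).
      by apply: leq_sum => j _; apply: cc_le.
    by rewrite sum_const_seq size_iota.
  have T2 : \sum_(i <- iota 1 K) rc n i c.-1 =
       \sum_(i <- iota 1 (c - Ub n)) rc n i c.-1
     + \sum_(i <- iota (c - Ub n).+1 (c.-1 - (c - Ub n))) rc n i c.-1
     + \sum_(i <- sR) rc n i c.-1.
    rewrite -!big_cat /=.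
    have := iotaD 1 (c - Ub n) (c.-1 - (c - Ub n)); rewrite add1n => <-.
    have -> : c - Ub n + (c.-1 - (c - Ub n)) = c.-1 by rewrite /Ub; lia.
    have := iotaD 1 c.-1 (Lb n).+1; rewrite add1n (_ : c.-1.+1 = c); last by lia.
    by rewrite EK -/sR => ->.
  have T3 : \sum_(i <- iota 1 (c - Ub n)) rc n i c.-1 = (c - Ub n) * n.+1.
    rewrite (eq_sum_in (G := fun _ => n.+1)); first by rewrite sum_const_seq size_iota.
    move=> i; rewrite mem_iota => Hi; apply/eqP; rewrite eqn_leq rc_le /=.
    rewrite -(rowfull n (_ : 0 < i)); last by lia.
    apply: rc_mono; move: Hi; rewrite /Ub; lia.
  have T4 := sum_count_le sR (fun i => rc n i c.-1) n.+1.
  have T5 : n.+1 * ((c - Ub n) + X) <= n.+1 * c.-1.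
    rewrite mulnDr (mulnC n.+1 (c - Ub n)) (mulnC n.+1 c.-1) -T3; move: T1 T4.
    rewrite T2 -/X; lia.
  rewrite leq_pmul2l // in T5; move: T5; rewrite /Ub; lia.
have C3 : count rect'' sR <= n * n * n.
  apply: leq_trans (count_has2_le _ _ _ _) _.
  apply: (@leq_trans (\sum_(i <- iota 1 K) \sum_(j <- iota 1 c.-1)
            ((greedyA n i c && greedyA n i j) * n))).
    apply: leq_sum_in => i Hi; apply: leq_sum_in => j Hj.
    case Ha: (greedyA n i c); case Hb: (greedyA n i j); rewrite ?andbF ?andFb ?mul0n;
      try by rewrite count0 // => x; rewrite ?andbF ?andFb.
    rewrite [X in _ <= X]/= mul1n; apply: leq_trans (count_sub_iota _ _ Hc) _; rewrite EK.
    apply: leq_trans (col_others (j := j) (i' := i) _ Hb); first by apply: sub_count => k /=.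
    by move: Hi; rewrite mem_iota; lia.
  apply: (@leq_trans (\sum_(i <- iota 1 K) (greedyA n i c * (n * n)))).
    apply: leq_sum => i _; case Ha: (greedyA n i c); last first.
      by rewrite big1.
    rewrite -big_distrl /= -count_sumE -/(rc n i c.-1).
    have E : rc n i c = rc n i c.-1 + greedyA n i c by rewrite -{1}(prednK Hc) rcS (prednK Hc).
    have H := rc_le n i c; rewrite Ha in E.
    rewrite mul1n; apply: leq_mul => //; lia.
  rewrite -big_distrl /= -count_sumE -/(cc n c K) mulnA leq_mul2r leq_mul2r.
  by rewrite -ltnS Hm !orbT.
move: Hcover C1 C2 C3; rewrite /Ub /Lb n3E; lia.
Qed.

Lemma lower n k l : greedyA n k l -> k <= l + Lb n.
Proof.
move=> Ha; have [Hk Hl] := pos_step Ha.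
rewrite leqNgt; apply/negP => Hlt.
have H1 := cc_step Ha.
have H2 := colfull n Hl.
have H3 : cc n l (l + Lb n) <= cc n l k.-1 by apply: cc_mono; lia.
lia.
Qed.


Lemma lowZ n i j : j + Lb n < i -> greedyA n i j = false.
Proof. move=> H; apply/negP => /lower; lia. Qed.
Lemma upZ n i j : i.-1 + Ub n < j -> greedyA n i j = false.
Proof. move=> H; apply/negP => /upper; lia. Qed.

Lemma count0_in (T : eqType) (p : pred T) s : (forall x, x \in s -> p x = false) -> count p s = 0.
Proof.
elim: s => //= x s IH H; rewrite H ?inE ?eqxx //= IH // => y Hy; apply: H; by rewrite inE Hy orbT.
Qed.

Lemma iota_shift p m : iota p.+1 m = map (addn p) (iota 1 m).
Proof. by rewrite -iotaDl addn1. Qed.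

Lemma shift_main n a0 p :
  Ub n + Lb n < a0 ->
  (forall i j, a0 - (Ub n + Lb n) <= i < a0 -> greedyA n (i + p) (j + p) = greedyA n i j) ->
  forall i j, a0 <= i -> greedyA n (i + p) (j + p) = greedyA n i j.
Proof.
move=> Ha0 H i.
elim/ltn_ind: i => i IHi j Hi.
elim/ltn_ind: j => j IHj.
have HZ : forall x y, a0 - (Ub n + Lb n) <= x < i -> greedyA n (x + p) (y + p) = greedyA n x y.
  move=> x y /andP[H1 H2]; case: (ltnP x a0) => H3; first by apply: H; lia.
  by apply: IHi.
case: (ltnP (j + Lb n) i) => Hj1.
  by rewrite !lowZ //; lia.
case: (ltnP (i.-1 + Ub n) j) => Hj2.
  by rewrite !upZ //; lia.
have Hfar : forall x, 0 < x < i -> x < a0 - (Ub n + Lb n) ->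
     greedyA n x j = false /\ greedyA n (x + p) (j + p) = false.
  move=> x Hx Hx2; split; apply: upZ; lia.
have HY : forall x, 0 < x < i -> greedyA n (x + p) (j + p) = greedyA n x j.
  move=> x Hx; case: (ltnP x (a0 - (Ub n + Lb n))) => Hx2.
    by have [-> ->] := Hfar x Hx Hx2.
  apply: HZ; lia.
have Ej : (j + p).-1 = p + j.-1 by lia.
have Ei : (i + p).-1 = p + i.-1 by lia.
rewrite (stepE n (i + p)) (stepE n i) Ej Ei.
have -> : rc n (i + p) (p + j.-1) = rc n i j.-1.
  rewrite /rc count_iotaD count0_in ?add0n; last first.
    move=> x; rewrite mem_iota => Hx; apply: lowZ; lia.
  rewrite iota_shift count_map; apply: eq_in_count => x; rewrite mem_iota => Hx /=.
  rewrite (addnC p x); apply: IHj; lia.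
have -> : cc n (j + p) (p + i.-1) = cc n j i.-1.
  rewrite /cc count_iotaD count0_in ?add0n; last first.
    move=> x; rewrite mem_iota => Hx; apply: upZ; lia.
  rewrite iota_shift count_map; apply: eq_in_count => x; rewrite mem_iota => Hx /=.
  rewrite (addnC p x); apply: HY; lia.
have -> : rect n (i + p) (j + p) = rect n i j.
  rewrite /rect Ej Ei (iotaD 1 p i.-1) has_cat.
  have -> : has (fun x => has (fun y => [&& greedyA n x y, greedyA n x (j + p)
              & greedyA n (i + p) y]) (iota 1 (p + j.-1))) (iota 1 p) = false.
    apply/hasPn => x; rewrite mem_iota => Hx; apply/hasPn => y _.
    rewrite (upZ (i := x) (j := j + p)) /= ?andbF //; lia.
  rewrite /= add1n (iota_shift p i.-1) has_map; apply: eq_in_has => x; rewrite mem_iota => Hx /=.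
  rewrite (iotaD 1 p j.-1) has_cat.
  have -> : has (fun y => [&& greedyA n (p + x) y, greedyA n (p + x) (j + p)
              & greedyA n (i + p) y]) (iota 1 p) = false.
    apply/hasPn => y; rewrite mem_iota => Hy.
    rewrite (lowZ (i := i + p)) ?andbF //; lia.
  rewrite /= add1n (iota_shift p j.-1) has_map; apply: eq_in_has => y; rewrite mem_iota => Hy /=.
  rewrite (addnC p x) (addnC p y) HY; last by lia.
  rewrite IHj; last by lia.
  case: (ltnP x (a0 - (Ub n + Lb n))) => Hx2.
    have Hx3 : 0 < x < i by lia.
    by have [-> _] := Hfar x Hx3 Hx2; rewrite /= !andbF.
  rewrite HZ //; lia.
have -> : (0 < i + p) = (0 < i) by lia.
by have -> : (0 < j + p) = (0 < j) by lia.
Qed.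

Lemma shift_all n a0 p :
  Ub n + Lb n < a0 ->
  (forall i j, a0 - (Ub n + Lb n) <= i < a0 -> greedyA n (i + p) (j + p) = greedyA n i j) ->
  forall i j, a0 - (Ub n + Lb n) <= i -> greedyA n (i + p) (j + p) = greedyA n i j.
Proof.
move=> Ha0 H i j Hi; case: (ltnP i a0) => Hi2; first by apply: H; lia.
exact: (shift_main Ha0 H).
Qed.


Definition Rb n := Ub n + Lb n.

Lemma final_of_window n a0 b0 :
  Rb n + Lb n < a0 -> a0 < b0 ->
  (forall i o, a0 - Rb n <= i < a0 -> o < Rb n ->
     greedyA n (i + (b0 - a0)) (i + (b0 - a0) - Lb n + o) = greedyA n i (i - Lb n + o)) ->
  exists pp p : nat, 0 < p /\
    (forall i j : nat, pp < i -> 0 < j -> greedyA n (i + p) (j + p) = greedyA n i j) /\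
    pp + p <= b0.
Proof.
move=> Ha0 Hab Hw.
exists (a0 - Rb n).-1, (b0 - a0); split; first lia.
split; last lia.
move=> i j Hi _.
apply: (@shift_all n a0); rewrite -/(Rb n); try lia.
clear Hi; move=> {}i {}j Hi2.
case: (ltnP (j + Lb n) i) => Hj1; first by rewrite !lowZ //; lia.
case: (ltnP (i.-1 + Ub n) j) => Hj2; first by rewrite !upZ //; lia.
have := Hw i (j - (i - Lb n)) Hi2.
have -> : i - Lb n + (j - (i - Lb n)) = j by lia.
have -> : i + (b0 - a0) - Lb n + (j - (i - Lb n)) = j + (b0 - a0) by lia.
apply; rewrite /Rb; lia.
Qed.

Definition st n k : {ffun 'I_(Rb n) -> {set 'I_(Rb n)}} :=
  [ffun d : 'I_(Rb n) => [set o : 'I_(Rb n) | greedyA n (k - d.+1) (k - d.+1 - Lb n + o)]].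

Lemma window_of_st n a0 b0 : Rb n + Lb n < a0 -> a0 < b0 -> st n a0 = st n b0 ->
  (forall i o, a0 - Rb n <= i < a0 -> o < Rb n ->
     greedyA n (i + (b0 - a0)) (i + (b0 - a0) - Lb n + o) = greedyA n i (i - Lb n + o)).
Proof.
move=> Ha0 Hab E i o Hi Ho.
have Hd : a0 - i.+1 < Rb n by lia.
have := congr1 (fun F : {ffun 'I_(Rb n) -> {set 'I_(Rb n)}} => Ordinal Ho \in F (Ordinal Hd)) E.
rewrite /st !ffunE !inE /=.
have -> : a0 - (a0 - i.+1).+1 = i by lia.
by have -> : b0 - (a0 - i.+1).+1 = i + (b0 - a0) by lia.
Qed.

Lemma card_set_count M (P : nat -> bool) :
  #|[set o : 'I_M | P o]| = count P (iota 0 M).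
Proof.
rewrite -sum1_card -sum1_count.
have -> : iota 0 M = index_iota 0 M by rewrite /index_iota subn0.
rewrite big_mkord.
by apply: eq_bigl => o; rewrite inE.
Qed.

Lemma st_card n k d : Rb n + Lb n < k -> #|st n k d| = n.+1.
Proof.
move=> Hk; rewrite /st ffunE (@card_set_count _ (fun x => greedyA n (k - d.+1) (k - d.+1 - Lb n + x))).
set i := k - d.+1.
have Hi : Lb n < i by rewrite /i; have := ltn_ord d; lia.
have Hi0 : 0 < i by lia.
have E := rowfull n Hi0; rewrite /rc in E.
rewrite (_ : i.-1 + Ub n = (i - Lb n).-1 + Rb n) in E; last by rewrite /Rb; lia.
rewrite count_iotaD count0_in ?add0n in E; last first.
  move=> x; rewrite mem_iota => Hx; apply: lowZ; lia.
rewrite (_ : (i - Lb n).-1.+1 = (i - Lb n) + 0) in E; last by lia.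
rewrite iotaDl count_map in E; rewrite -E; reflexivity.
Qed.


Definition Aset n := [set F : {ffun 'I_(Rb n) -> {set 'I_(Rb n)}} | [forall d, #|F d| == n.+1]].

Lemma pigeon n : exists x y, x < y <= #|Aset n| /\
   st n (Rb n + Lb n + 1 + x) = st n (Rb n + Lb n + 1 + y).
Proof.
pose f (x : 'I_(#|Aset n|.+1)) := st n (Rb n + Lb n + 1 + x).
have HA : forall x, f x \in Aset n.
  move=> x; rewrite inE; apply/forallP => d; rewrite st_card //; lia.
case: (boolP (injectiveb f)) => Hinj.
  have := card_imset (mem 'I_(#|Aset n|.+1)) (injectiveP _ Hinj).
  rewrite card_ord => E.
  have : #|[set f x | x in 'I_(#|Aset n|.+1)]| <= #|Aset n|.
    apply: subset_leq_card; apply/subsetP => y /imsetP [x _ ->]; exact: HA.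
  rewrite E; lia.
move/injectivePn: Hinj => [x [y Hxy Hf]].
case: (ltngtP x y) => H.
- exists x, y; split; last exact: Hf.
  have := ltn_ord y; lia.
- exists y, x; split; last by rewrite /f in Hf; rewrite Hf.
  have := ltn_ord x; lia.
- by move/eqP: Hxy; case; apply: val_inj.
Qed.

Lemma foldr_mul_const (T : Type) (s : seq T) c : foldr muln 1 [seq c | _ <- s] = c ^ size s.
Proof. elim: s => [|x s IH] //=; by rewrite IH expnS. Qed.

Lemma card_Aset n : #|Aset n| = 'C(Rb n, n.+1) ^ Rb n.
Proof.
have -> : #|Aset n| = #|family (fun _ : 'I_(Rb n) => [pred X : {set 'I_(Rb n)} | #|X| == n.+1])|.
  apply: eq_card => F; rewrite inE; apply/forallP/familyP => H d; move: (H d); by rewrite inE.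
rewrite card_family foldr_mul_const size_enum_ord.
congr (_ ^ _); have := card_draws ('I_(Rb n)) n.+1; rewrite card_ord => <-.
by apply: eq_card => X; rewrite inE.
Qed.

Lemma ffact_le_exp m k : m ^_ k <= m ^ k.
Proof.
elim: k m => [|k IH] m //; rewrite ffactnS expnS leq_mul //.
apply: leq_trans (IH _) _; case: k {IH} => [|k] //; rewrite leq_exp2r //; exact: leq_pred.
Qed.

Lemma bin_le_exp m k : 'C(m, k) <= m ^ k.
Proof.
apply: (@leq_trans (m ^_ k)); last exact: ffact_le_exp.
by rewrite -bin_ffact leq_pmulr // fact_gt0.
Qed.


Lemma poly_ineq n : 3 <= n ->
  (n + 4) * (n.+1 * (3 * (n * n * n) + 3 * n + 1)) + 1
    <= (2 * (n * n * n) + 3 * n - n * n) * (2 * (n * n * n) + 3 * n - n * n).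
Proof.
move=> H; have [m ->] : exists m, n = m + 3 by exists (n - 3); lia.
nia.
Qed.

Lemma Rb_le n : 3 <= n -> 3 * (n * n * n) + 3 * n + 1 <= 2 ^ (n + 4).
Proof.
move=> H; elim: n H => [|n IH] H //.
case: (ltngtP n 3) => H3.
- have -> : n = 2 by lia. by [].
- apply: (@leq_trans (2 * (3 * (n * n * n) + 3 * n + 1))); first by nia.
  rewrite addSn expnS leq_mul2l /=; apply: IH; lia.
- by rewrite H3.
Qed.


Definition tblf (T : seq (seq nat)) (i j : nat) : bool := j \in nth [::] T i.

Definition check n T K M : bool :=
  all (fun k => all (fun l => if (k <= l + Lb n) && (l <= k.-1 + Ub n)
       then tblf T k l == greedy_step n (tblf T) k l else ~~ tblf T k l) (iota 0 M.+1)) (iota 0 K.+1).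

Lemma check_ok n T K M : check n T K M ->
  forall k l, k <= K -> l <= M -> greedyA n k l = tblf T k l.
Proof.
move=> Hc k l.
have [N HN] : exists N, k + l <= N by exists (k + l).
elim: N k l HN => [|N IH] k l HN Hk Hl.
  have -> : k = 0 by lia. have -> : l = 0 by lia.
  have H0 : 0 \in iota 0 K.+1 by rewrite mem_iota.
  have H0' : 0 \in iota 0 M.+1 by rewrite mem_iota.
  have := allP (allP Hc 0 H0) 0 H0'.
  by move=> /eqP ->; rewrite A0l.
have Hk' : k \in iota 0 K.+1 by rewrite mem_iota; lia.
have Hl' : l \in iota 0 M.+1 by rewrite mem_iota; lia.
have := allP (allP Hc k Hk') l Hl'.
case: ifP => [_ /eqP ->|Hb /negbTE ->].
  rewrite greedyA_step; apply: greedy_step_ext => i j Hi Hj Hij; apply: IH; lia.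
have := negbT Hb; rewrite negb_and -!ltnNge => /orP [H|H]; [exact: lowZ | exact: upZ].
Qed.

Definition wcheck T a0 p R L : bool :=
  all (fun i => all (fun o => tblf T (i + p) (i + p - L + o) == tblf T i (i - L + o)) (iota 0 R))
      (iota (a0 - R) R).

Lemma wcheck_ok n T K M a0 p : check n T K M -> wcheck T a0 p (Rb n) (Lb n) ->
  Rb n + Lb n < a0 -> a0 + p <= K.+1 -> a0 + p + Rb n <= M + Lb n + 2 ->
  forall i o, a0 - Rb n <= i < a0 -> o < Rb n ->
     greedyA n (i + p) (i + p - Lb n + o) = greedyA n i (i - Lb n + o).
Proof.
move=> Hc Hw Ha HK HM i o Hi Ho.
rewrite !(check_ok Hc); try lia.
have H1 : i \in iota (a0 - Rb n) (Rb n) by rewrite mem_iota; lia.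
have H2 : o \in iota 0 (Rb n) by rewrite mem_iota; lia.
by have /eqP := allP (allP Hw i H1) o H2.
Qed.

Definition T1 := [:: [:: ]; [:: 1; 2]; [:: 1; 3]; [:: 2; 3]; [:: 4; 5]; [:: 4; 6]; [:: 5; 6]; [:: 7; 8]; [:: 7; 9]; [:: 8; 9]; [:: 10; 11]; [:: 10; 12]; [:: 11; 12]; [:: 13; 14]; [:: 13; 15]].
Definition T2 := [:: [:: ]; [:: 1; 2; 3]; [:: 1; 4; 5]; [:: 1; 6; 7]; [:: 2; 4; 6]; [:: 2; 5; 7]; [:: 3; 4; 7]; [:: 3; 5; 6]; [:: 8; 9; 10]; [:: 8; 11; 12]; [:: 8; 13; 14]; [:: 9; 11; 13]; [:: 9; 12; 14]; [:: 10; 11; 14]; [:: 10; 12; 13]; [:: 15; 16; 17]; [:: 15; 18; 19]; [:: 15; 20; 21]; [:: 16; 18; 20]; [:: 16; 19; 21]; [:: 17; 18; 21]; [:: 17; 19; 20]; [:: 22; 23; 24]; [:: 22; 25; 26]; [:: 22; 27; 28]; [:: 23; 25; 27]; [:: 23; 26; 28]; [:: 24; 25; 28]; [:: 24; 26; 27]; [:: 29; 30; 31]; [:: 29; 32; 33]; [:: 29; 34; 35]; [:: 30; 32; 34]; [:: 30; 33; 35]; [:: 31; 32; 35]; [:: 31; 33; 34]; [:: 36; 37; 38]; [:: 36; 39; 40]; [:: 36; 41; 42]; [:: 37; 39; 41]; [:: 37; 40; 42]; [:: 38; 39; 42]; [:: 38; 40; 41]; [:: 43; 44; 45]; [:: 43;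 46; 47]; [:: 43; 48; 49]; [:: 44; 46; 48]; [:: 44; 47; 49]; [:: 45; 46; 49]; [:: 45; 47; 48]; [:: 50; 51; 52]; [:: 50; 53; 54]; [:: 50; 55; 56]; [:: 51; 53; 55]; [:: 51; 54; 56]; [:: 52; 53; 56]; [:: 52; 54; 55]; [:: 57; 58; 59]; [:: 57; 60; 61]].

Definition check1 : check 1 T1 14 16 = true := @eq_refl bool true <: check 1 T1 14 16 = true.
Definition wcheck1 : wcheck T1 12 3 (Rb 1) (Lb 1) = true := @eq_refl bool true <: wcheck T1 12 3 (Rb 1) (Lb 1) = true.
Definition check2 : check 2 T2 58 68 = true := @eq_refl bool true <: check 2 T2 58 68 = true.
Definition wcheck2 : wcheck T2 52 7 (Rb 2) (Lb 2) = true := @eq_refl bool true <: wcheck T2 52 7 (Rb 2) (Lb 2) = true.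

Lemma small1 : exists pp p : nat, 0 < p /\
    (forall i j : nat, pp < i -> 0 < j -> greedyA 1 (i + p) (j + p) = greedyA 1 i j) /\
    pp + p <= 15.
Proof.
apply: (@final_of_window 1 12 15) => //.
exact: (@wcheck_ok 1 T1 14 16 12 3 check1 wcheck1 isT isT isT).
Qed.

Lemma small2 : exists pp p : nat, 0 < p /\
    (forall i j : nat, pp < i -> 0 < j -> greedyA 2 (i + p) (j + p) = greedyA 2 i j) /\
    pp + p <= 59.
Proof.
apply: (@final_of_window 2 52 59) => //.
exact: (@wcheck_ok 2 T2 58 68 52 7 check2 wcheck2 isT isT isT).
Qed.


Lemma big_case n : 3 <= n -> exists pp p : nat,
    0 < p /\
    (forall i j : nat, pp < i -> 0 < j ->
        greedyA n (i + p) (j + p) = greedyA n i j) /\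
    pp + p <= 2 ^ ((2 * n ^ 3 + 3 * n - n ^ 2) ^ 2).
Proof.
move=> Hn.
have [x [y [Hxy E]]] := pigeon n.
have Ha0 : Rb n + Lb n < Rb n + Lb n + 1 + x by lia.
have Hab : Rb n + Lb n + 1 + x < Rb n + Lb n + 1 + y by lia.
have [pp [p [H1 [H2 H3]]]] := final_of_window Ha0 Hab (window_of_st Ha0 Hab E).
exists pp, p; split => //; split => //.
set X := (n + 4) * (n.+1 * Rb n).
have ER : Rb n = 3 * (n * n * n) + 3 * n + 1 by rewrite /Rb /Ub /Lb n3E; lia.
have EL : Lb n = 2 * (n * n * n) + 2 * n by rewrite /Lb n3E.
have HA : #|Aset n| <= 2 ^ X.
  rewrite card_Aset /X mulnA expnM.
  have HR0 : 0 < Rb n by rewrite ER; lia.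
  rewrite leq_exp2r //; apply: leq_trans (bin_le_exp _ _) _.
  rewrite expnM leq_exp2r //; rewrite ER; exact: Rb_le.
have HX : Rb n + Lb n + 1 <= 2 ^ X.
  apply: ltnW; apply: leq_trans (ltn_expl X (isT : 1 < 2)).
  rewrite /X ER EL; nia.
have HP := poly_ineq Hn.
apply: (leq_trans H3); apply: (@leq_trans (2 ^ X.+1)).
  rewrite expnS mul2n -addnn; move: Hxy HA HX; lia.
rewrite leq_exp2l // /X ER.
have -> : n ^ 3 = n * n * n by exact: n3E.
have -> : n ^ 2 = n * n by rewrite expnS expn1.
rewrite expnS expn1; move: HP; lia.
Qed.


Theorem theorem3p3 (n : nat) : 0 < n ->
  exists pp p : nat,
    0 < p /\
    (forall i j : nat, pp < i -> 0 < j ->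
        greedyA n (i + p) (j + p) = greedyA n i j) /\
    pp + p <= 2 ^ ((2 * n ^ 3 + 3 * n - n ^ 2) ^ 2).
Proof.
case: n => [//|[|[|n]]] _.
- have [pp [p [H1 [H2 H3]]]] := small1.
  exists pp, p; split => //; split => //.
  apply: (leq_trans H3); apply: (@leq_trans (2 ^ 4)); first by [].
  by rewrite leq_exp2l.
- have [pp [p [H1 [H2 H3]]]] := small2.
  exists pp, p; split => //; split => //.
  apply: (leq_trans H3); apply: (@leq_trans (2 ^ 6)); first by [].
  by rewrite leq_exp2l.
- by apply: big_case.
Qed.
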